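(* Let $\mathcal X$ be a finite set with $|\mathcal X|\ge n\ge1$, $s:2^{\mathcal X}\to\mathbb R$ non-negative and monotone, $d$ a metric on $\mathcal X$, $\mathrm{div}$ the associated sum-dispersion, $\lambda>0$, and $\alpha\in(0,1]$. Let $B_n$ be the output of an $\alpha$-approximate greedy run for the set function $\tilde a:=\tfrac12 s+\lambda\,\mathrm{div}$ with cardinality $n$, let $a:=s+\lambda\,\mathrm{div}$, and let $B_n^*\in\arg\max_{B\subseteq\mathcal X,|B|=n}a(B)$. Then $$a(B_n)\ge\frac{\alpha\hat\gamma}{2}\,a(B_n^* ),\qquad\hat\gamma:=\gamma_{B_n^*\cup B_n,n}(s).$$
   Context: Marginal gain: $\Delta_f(x\mid B):=f(B\cup\{x\})-f(B)$ for a set function $f$. $s$ is monotone if $\Delta_s(x\mid B)\ge0$ for all $B$ and $x\notin B$; non-negative if $s(B)\ge0$ for all $B$. Sum-dispersion: $\mathrm{div}(B):=\frac12\sum_{x\in B}\sum_{x'\in B}d(x,x')$. An $\alpha$-approximate greedy run for a set function $f$ with cardinality $n$: $B_0=\emptyset$ and for $i=0,\dots,n-1$ an element $x_i\in\mathcal X\setminus B_i$ is chosen with $\Delta_f(x_i\mid B_i)\ge\alpha\max_{x\in\mathcal X\setminus B_i}\Delta_f(x\mid B_i)$, and $B_{i+1}=B_i\cup\{x_i\}$; its output is $B_n$. Submodularity ratio: $\gamma_{B,n}(s):=\min_{S\subseteq\mathcal X,\ B'\subseteq B\setminus S,\ |S|\le n}\frac{\sum_{x\in S}\Delta_s(x\mid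 B')}{s(B'\cup S)-s(B')}$, with $0/0:=1$ and $c/0:=+\infty$ for $c>0$. *)

(* Defs.v *)
From HB Require Import structures.
From mathcomp Require Import all_boot all_order all_algebra.
Set Implicit Arguments. Unset Strict Implicit. Unset Printing Implicit Defensive.
Import Order.TTheory GRing.Theory Num.Theory.
Local Open Scope ring_scope.

Section Defs.
Variables (R : realFieldType) (X : finType).

Definition marg (f : {set X} -> R) (x : X) (B : {set X}) : R :=
  f (x |: B) - f B.

Definition monotone_set (f : {set X} -> R) : Prop :=
  forall (B : {set X}) (x : X), x \notin B -> 0 <= marg f x B.

Definition nonneg_set (f : {set X} -> R) : Prop :=
  forall B : {set X}, 0 <= f B.

Definition is_metric (d : X -> X -> R) : Prop :=
  [/\ forall x y, d x y = 0 <-> x = y,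
      forall x y, d x y = d y x &
      forall x y z, d x z <= d x y + d y z].

Definition sumdisp (d : X -> X -> R) (B : {set X}) : R :=
  2^-1 * \sum_(x in B) \sum_(x' in B) d x x'.

(* ratio with conventions 0/0 := 1 and c/0 := +oo for c > 0; a +oo value
   is represented by 1, which does not change the minimum below since the
   pair (S, B') = (set0, set0) always contributes 0/0 = 1 *)
Definition sratio (num den : R) : R := if den == 0 then 1 else num / den.

Definition subm_ratio (s : {set X} -> R) (B : {set X}) (n : nat) : R :=
  \big[Order.min/1]_(S : {set X} | (#|S| <= n)%N)
   \big[Order.min/1]_(B' : {set X} | B' \subset B :\: S)
     sratio (\sum_(x in S) marg s x B') (s (B' :|: S) - s B').

Definition gprefix (x : nat -> X) (i : nat) : {set X} :=
  \bigcup_(j < i) [set x j].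

Definition approx_greedy_run (f : {set X} -> R) (alpha : R) (n : nat)
  (x : nat -> X) : Prop :=
  forall i, (i < n)%N ->
    x i \notin gprefix x i /\
    forall y, y \notin gprefix x i ->
      alpha * marg f y (gprefix x i) <= marg f (x i) (gprefix x i).

End Defs.

(* Main.v *)
Require Import Defs.
From HB Require Import structures.
From mathcomp Require Import all_boot all_order all_algebra.
Import Order.TTheory GRing.Theory Num.Theory.
Local Open Scope ring_scope.
From mathcomp Require Import ring lra zify.
Set Implicit Arguments. Unset Strict Implicit.

Lemma sumU_disj (R : realFieldType) (X : finType) (A B : {set X}) (F : X -> R) :
  A :&: B = set0 -> \sum_(i in A :|: B) F i = \sum_(i in A) F i + \sum_(i in B) F i.
Proof.
move=> dis; rewrite (big_setID A) /=.
have -> : (A :|: B) :&: A = A by rewrite setUK.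
have -> : (A :|: B) :\: A = B.
  apply/setP=> y; rewrite !inE; case: (boolP (y \in A)) => yA //=.
  case: (boolP (y \in B)) => yB //; have : y \in A :&: B by rewrite inE yA yB.
  by rewrite dis inE.
done.
Qed.

Definition dd (R : realFieldType) (X : finType) (d : X -> X -> R) (P Q : {set X}) : R :=
  \sum_(x in P) \sum_(y in Q) d x y.

Lemma metric_facts (R : realFieldType) (X : finType) (d : X -> X -> R) :
  is_metric d -> (forall x, d x x = 0) /\ (forall x y, 0 <= d x y).
Proof.
case=> h0 hs ht; have dz : forall x, d x x = 0 by move=> x; apply/h0.
split=> // x y; have := ht x y x; rewrite dz => h.
have := hs x y; lra.
Qed.

Lemma dd_ge0 (R : realFieldType) (X : finType) (d : X -> X -> R) P Q :
  is_metric d -> 0 <= dd d P Q.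
Proof.
move=> /metric_facts [_ h]; rewrite /dd; apply: sumr_ge0 => x _; apply: sumr_ge0 => y _; exact: h.
Qed.

Lemma ddUr (R : realFieldType) (X : finType) (d : X -> X -> R) P Q1 Q2 :
  Q1 :&: Q2 = set0 -> dd d P (Q1 :|: Q2) = dd d P Q1 + dd d P Q2.
Proof.
move=> h; rewrite /dd -big_split /=; apply: eq_bigr => x _; exact: sumU_disj.
Qed.

Lemma ddUl (R : realFieldType) (X : finType) (d : X -> X -> R) P1 P2 Q :
  P1 :&: P2 = set0 -> dd d (P1 :|: P2) Q = dd d P1 Q + dd d P2 Q.
Proof. move=> h; rewrite /dd; exact: sumU_disj. Qed.

Lemma ddC (R : realFieldType) (X : finType) (d : X -> X -> R) P Q :
  is_metric d -> dd d P Q = dd d Q P.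
Proof.
case=> _ hs _; rewrite /dd exchange_big /=; apply: eq_bigr => x _; apply: eq_bigr => y _; exact: hs.
Qed.

Lemma sumdisp_dd (R : realFieldType) (X : finType) (d : X -> X -> R) P :
  sumdisp d P = 2^-1 * dd d P P.
Proof. by []. Qed.

Lemma sumdispU (R : realFieldType) (X : finType) (d : X -> X -> R) A C :
  is_metric d -> A :&: C = set0 ->
  sumdisp d (A :|: C) = sumdisp d A + sumdisp d C + dd d A C.
Proof.
move=> hm h; rewrite !sumdisp_dd ddUl // !ddUr // (ddC C A hm).
rewrite !mulrDr; lra.
Qed.

Lemma arith_ps (R : realFieldType) (a b c X Y DA DC : R) :
  1 <= a -> 0 <= b -> 0 <= c -> b + 1 <= a ->
  0 <= X -> 0 <= Y -> 0 <= DA -> 0 <= DC ->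
  b * DA <= (a - 1) * Y -> c * DA <= (a - 1) * X -> a * DC <= (c - 1) * X ->
  (a = 1 \/ 2 <= a) ->
  a * (b + c) * (DA + DC + X) <= (a + c) * (a + c - 1) * (X + Y).
Proof.
move=> ha hb hc hab hX hY hDA hDC t1 t2 t3 hcase.
have s1 : (b + c) * (a * DC) <= (b + c) * ((c - 1) * X).
  by apply: ler_wpM2l => //; lra.
suff hT : 0 <= (a - b) * (a + c - 1) * X + (a + c) * (a + c - 1) * Y - a * (b + c) * DA.
  have e : (a + c) * (a + c - 1) * (X + Y) - a * (b + c) * (DA + DC + X)
    = ((a - b) * (a + c - 1) * X + (a + c) * (a + c - 1) * Y - a * (b + c) * DA)
      + ((b + c) * ((c - 1) * X) - (b + c) * (a * DC)) by ring.
  rewrite -subr_ge0 e; lra.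
case: hcase => [a1|a2].
  have b0 : b = 0 by lra.
  subst a b; have : c * DA <= 0 by move: t2; rewrite subrr mul0r.
  move=> h; have : 0 <= (1 + c) * (1 + c - 1) * Y by apply: mulr_ge0 => //; apply: mulr_ge0; lra.
  have : 0 <= c * X by apply: mulr_ge0.
  lra.
have u1 : (a - b) * (a + c - 1) * (c * DA) <= (a - b) * (a + c - 1) * ((a - 1) * X).
  by apply: ler_wpM2l => //; apply: mulr_ge0; lra.
have u2 : (a + c) * (a + c - 1) * (b * DA) <= (a + c) * (a + c - 1) * ((a - 1) * Y).
  by apply: ler_wpM2l => //; apply: mulr_ge0; lra.
have u3 : 0 <= a * c * (b + c) * DA.
  apply: mulr_ge0 => //; apply: mulr_ge0; [apply: mulr_ge0|]; lra.
have e : (a - 1) * ((a - b) * (a + c - 1) * X + (a + c) * (a + c - 1) * Y - a * (b + c) * DA)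
  = ((a - b) * (a + c - 1) * ((a - 1) * X) - (a - b) * (a + c - 1) * (c * DA))
   + ((a + c) * (a + c - 1) * ((a - 1) * Y) - (a + c) * (a + c - 1) * (b * DA))
   + a * c * (b + c) * DA by ring.
have h : 0 <= (a - 1) * ((a - b) * (a + c - 1) * X + (a + c) * (a + c - 1) * Y - a * (b + c) * DA).
  rewrite e; lra.
rewrite pmulr_rge0 in h => //; lra.
Qed.

Lemma tri_pt (R : realFieldType) (X : finType) (d : X -> X -> R) (P Q : {set X}) x :
  is_metric d -> x \in P ->
  #|Q|%:R * (\sum_(x' in P) d x x') + 2 * (\sum_(q in Q) d x q)
  <= \sum_(x' in P) (\sum_(q in Q) d x q + \sum_(q in Q) d x' q).
Proof.
move=> hm xP; have [dz _] := metric_facts hm; case: hm => _ hs ht.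
rewrite (bigD1 x xP) /= (bigD1 x xP) /= dz add0r.
have : \sum_(i in P | i != x) #|Q|%:R * d x i <=
       \sum_(i in P | i != x) (\sum_(q in Q) d x q + \sum_(q in Q) d i q).
  apply: ler_sum => i _; rewrite mulr_natl -sumr_const -big_split /=.
  apply: ler_sum => q _; rewrite (hs i q); exact: ht.
rewrite -mulr_sumr; lra.
Qed.

Lemma tri (R : realFieldType) (X : finType) (d : X -> X -> R) (P Q : {set X}) :
  is_metric d -> #|Q|%:R * sumdisp d P <= (#|P|%:R - 1) * dd d P Q.
Proof.
move=> hm.
have h : \sum_(x in P) (#|Q|%:R * (\sum_(x' in P) d x x') + 2 * (\sum_(q in Q) d x q))
  <= \sum_(x in P) \sum_(x' in P) (\sum_(q in Q) d x q + \sum_(q in Q) d x' q).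
  by apply: ler_sum => x xP; exact: tri_pt.
rewrite big_split /= -mulr_sumr -mulr_sumr in h.
have e : \sum_(x in P) \sum_(x' in P) (\sum_(q in Q) d x q + \sum_(q in Q) d x' q)
   = #|P|%:R * dd d P Q + #|P|%:R * dd d P Q.
  rewrite /dd; under eq_bigr => x _ do rewrite big_split /= sumr_const -mulr_natl.
  rewrite big_split /= -mulr_sumr; congr (_ + _).
  by rewrite sumr_const mulr_natl.
rewrite e -/(dd d P P) -/(dd d P Q) in h.
rewrite sumdisp_dd; lra.
Qed.

Lemma mono_sub (R : realFieldType) (X : finType) (s : {set X} -> R) (B C : {set X}) :
  monotone_set s -> B \subset C -> s B <= s C.
Proof.
move=> hm; move: {2}#|C :\: B| (erefl #|C :\: B|) => k; elim: k B => [|k IH] B hk hBC.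
  have : C :\: B = set0 by apply/eqP; rewrite -cards_eq0 hk.
  move/eqP; rewrite setD_eq0 => hCB.
  by have -> : B = C by apply/eqP; rewrite eqEsubset hBC hCB.
have : (0 < #|C :\: B|)%N by rewrite hk.
rewrite card_gt0 => /set0Pn [y]; rewrite inE => /andP [yB yC].
apply: (le_trans (y := s (y |: B))).
  by have := hm B y yB; rewrite /marg subr_ge0.
apply: IH; last by rewrite subUset sub1set yC hBC.
have : (C :\: (y |: B)) = (C :\: B) :\ y by apply/setP => z; rewrite !inE; case: (z == y); rewrite ?andbF.
move=> ->; rewrite (cardsD1 y (C :\: B)) inE yB yC in hk.
by case: hk.
Qed.

Lemma gprefix0 (X : finType) (x : nat -> X) : gprefix x 0 = set0.
Proof. by rewrite /gprefix big_ord0. Qed.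

Lemma gprefixS (X : finType) (x : nat -> X) i : gprefix x i.+1 = x i |: gprefix x i.
Proof. by rewrite /gprefix big_ord_recr /= setUC. Qed.

Lemma gprefix_mono (X : finType) (x : nat -> X) i j : (i <= j)%N -> gprefix x i \subset gprefix x j.
Proof.
elim: j => [|j IH]; first by rewrite leqn0 => /eqP ->.
rewrite leq_eqVlt => /orP [/eqP -> //|]; rewrite ltnS => /IH h.
by rewrite gprefixS (subset_trans h) // subsetUr.
Qed.

Lemma card_gprefix (R : realFieldType) (X : finType) (f : {set X} -> R) alpha n x i :
  approx_greedy_run f alpha n x -> (i <= n)%N -> #|gprefix x i| = i.
Proof.
move=> hg; elim: i => [|i IH] hi; first by rewrite gprefix0 cards0.
rewrite gprefixS cardsU1 IH ?(ltnW hi) //.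
by have [-> _] := hg i hi.
Qed.

Lemma sumdisp_ge0 (R : realFieldType) (X : finType) (d : X -> X -> R) P :
  is_metric d -> 0 <= sumdisp d P.
Proof. move=> hm; rewrite sumdisp_dd; apply: mulr_ge0; [by rewrite invr_ge0 ler0n|exact: dd_ge0]. Qed.

Lemma ps (R : realFieldType) (X : finType) (d : X -> X -> R) (O G : {set X}) n :
  is_metric d -> #|O| = n -> (#|G| < n)%N ->
  #|O :\: G|%:R * #|G|%:R * sumdisp d O <= n%:R * (n%:R - 1) * dd d (O :\: G) G.
Proof.
move=> hm hO hG.
set A := O :\: G; set C := O :&: G; set B := G :\: O.
have eG : G = C :|: B by rewrite /C /B setIC setID.
have eO : O = C :|: A by rewrite /C /A setID.
have dCB : C :&: B = set0.
  apply/setP => z; rewrite !inE; case: (z \in O); case: (z \in G); by [].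
have dCA : C :&: A = set0.
  apply/setP => z; rewrite !inE; case: (z \in O); case: (z \in G); by [].
have cO : #|O| = (#|C| + #|A|)%N by rewrite cardsID.
have cG : #|G| = (#|C| + #|B|)%N by rewrite /C /B setIC cardsID.
have hdisp : sumdisp d O = sumdisp d C + sumdisp d A + dd d A C.
  by rewrite {1}eO sumdispU // (ddC _ _ hm).
have hdd : dd d A G = dd d A C + dd d A B by rewrite {1}eG ddUr.
rewrite hdisp hdd -hO cO cG !natrD.
have t1 := tri A B hm. have t2 := tri A C hm. have t3 := tri C A hm.
rewrite (ddC C A hm) in t3.
have := @arith_ps R #|A|%:R #|B|%:R #|C|%:R
  (dd d A C) (dd d A B) (sumdisp d A) (sumdisp d C).
have hab : (#|B| + 1 <= #|A|)%N by move: hG; rewrite -hO cO cG; lia.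
have ha : (1 <= #|A|)%N by lia.
have hcase : #|A|%:R = 1 :> R \/ 2 <= #|A|%:R :> R.
  case: (#|A|) ha => [|[|m]] // _; [by left|right]; by rewrite ler_nat.
move=> /(_ _ _ _ _ _ _ _ _ _ _ _ hcase) h.
have e1 : (#|C|%:R + #|A|%:R) = (#|A|%:R + #|C|%:R : R) by rewrite addrC.
rewrite e1.
have e2 : #|A|%:R * (#|C|%:R + #|B|%:R) * (sumdisp d C + sumdisp d A + dd d A C)
   = #|A|%:R * (#|B|%:R + #|C|%:R) * (sumdisp d A + sumdisp d C + dd d A C) :> R by ring.
rewrite e2; apply: h.
- by rewrite ler1n.
- by [].
- by [].
- by move: hab; rewrite -(ler_nat R) natrD.
- exact: dd_ge0.
- exact: dd_ge0.
- exact: sumdisp_ge0.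
- exact: sumdisp_ge0.
- exact: t1.
- exact: t2.
- exact: t3.
Qed.

Lemma marg_disp (R : realFieldType) (X : finType) (d : X -> X -> R) (G : {set X}) y :
  is_metric d -> y \notin G -> sumdisp d (y |: G) - sumdisp d G = \sum_(g in G) d y g.
Proof.
move=> hm yG; have [dz _] := metric_facts hm.
have dis : [set y] :&: G = set0.
  apply/setP => z; rewrite !inE; case: (eqVneq z y) => [->|] //=; by rewrite (negbTE yG).
rewrite sumdispU // sumdisp_dd /dd !big_set1 dz mulr0 add0r; lra.
Qed.

Lemma marg_s_ge0 (R : realFieldType) (X : finType) (s : {set X} -> R) (S B' : {set X}) :
  monotone_set s -> [disjoint S & B'] -> 0 <= \sum_(x in S) marg s x B'.
Proof.
move=> hm hd; apply: sumr_ge0 => x xS; apply: hm.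
by rewrite (disjointFr hd xS).
Qed.

Lemma gam_le1 (R : realFieldType) (X : finType) (s : {set X} -> R) B n :
  subm_ratio s B n <= 1.
Proof. exact: bigmin_le_id. Qed.

Lemma disj_of (X : finType) (S B' B : {set X}) : B' \subset B :\: S -> [disjoint S & B'].
Proof.
by move=> /subsetDP [_ h]; rewrite disjoint_sym.
Qed.

Lemma gam_ge0 (R : realFieldType) (X : finType) (s : {set X} -> R) B n :
  monotone_set s -> 0 <= subm_ratio s B n.
Proof.
move=> hm; apply: le_bigmin => // S _; apply: le_bigmin => // B' hB'.
have n0 := marg_s_ge0 hm (disj_of hB').
have d0 : 0 <= s (B' :|: S) - s B' by rewrite subr_ge0; apply: mono_sub => //; exact: subsetUl.
rewrite /sratio; case: eqP => // _; exact: divr_ge0.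
Qed.

Lemma gam_bound (R : realFieldType) (X : finType) (s : {set X} -> R) B n (S B' : {set X}) :
  monotone_set s -> (#|S| <= n)%N -> B' \subset B :\: S ->
  subm_ratio s B n * (s (B' :|: S) - s B') <= \sum_(x in S) marg s x B'.
Proof.
move=> hm hS hB'.
have n0 := marg_s_ge0 hm (disj_of hB').
have d0 : 0 <= s (B' :|: S) - s B' by rewrite subr_ge0; apply: mono_sub => //; exact: subsetUl.
have hle : subm_ratio s B n <= sratio (\sum_(x in S) marg s x B') (s (B' :|: S) - s B').
  apply: (le_trans (bigmin_le_cond _ _ hS)).
  exact: (bigmin_le_cond _ _ hB').
move: hle; rewrite /sratio; case: eqP => [->|hne]; first by rewrite mulr0.
have dp : 0 < s (B' :|: S) - s B' by rewrite lt_def; apply/andP; split => //; apply/eqP.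
by rewrite ler_pdivlMr.
Qed.

Lemma step_facts (R : realFieldType) (X : finType) (n : nat)
  (s : {set X} -> R) (d : X -> X -> R) (lambda alpha : R)
  (x : nat -> X) (O : {set X}) i :
  monotone_set s -> is_metric d -> 0 < lambda -> 0 < alpha ->
  approx_greedy_run (fun B => 2^-1 * s B + lambda * sumdisp d B) alpha n x ->
  #|O| = n -> (i < n)%N ->
  let f := (fun B => 2^-1 * s B + lambda * sumdisp d B) in
  let g := f (gprefix x i.+1) - f (gprefix x i) in
  let gam := subm_ratio s (O :|: gprefix x n) n in
  exists a S0 E : R,
  [/\ 1 <= a, a <= n%:R, 0 <= S0, 2^-1 * gam * (s O - s (gprefix x n)) <= 2^-1 * S0 &
      [/\ 0 <= E, a * i%:R * sumdisp d O <= n%:R * (n%:R - 1) * E &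
      alpha * (2^-1 * S0 + lambda * E) <= a * g]].
Proof.
move=> hm hd hl ha hg hO hi f g gam.
set G := gprefix x i; set A := O :\: G.
have cG : #|G| = i by apply: (card_gprefix hg); exact: ltnW.
have [xnot hgr] := hg i hi.
exists #|A|%:R, (\sum_(y in A) marg s y G), (dd d A G).
have hAG : forall y, y \in A -> y \notin G by move=> y; rewrite inE => /andP [].
have ca : (1 <= #|A|)%N.
  have := cardsID G O; rewrite -/A hO.
  have : (#|O :&: G| <= #|G|)%N by apply: subset_leq_card; exact: subsetIr.
  lia.
split.
- by rewrite ler1n.
- by rewrite ler_nat -hO; apply: subset_leq_card; exact: subsetDl.
- apply: sumr_ge0 => y yA; apply: hm; exact: hAG.
- have gb := gam_bound (B := O :|: gprefix x n) (n := n) (S := A) (B' := G) hm.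
  have hAn : (#|A| <= n)%N by rewrite -hO; apply: subset_leq_card; exact: subsetDl.
  have hGs : G \subset (O :|: gprefix x n) :\: A.
    apply/subsetDP; split.
      by apply: subset_trans (subsetUr _ _); apply: gprefix_mono; exact: ltnW.
    rewrite disjoint_sym; apply/pred0P => y /=; rewrite inE.
    by case: (y \in G); rewrite ?andbF ?andbT.
  have := gb hAn hGs.
  have m1 : s O <= s (G :|: A).
    apply: mono_sub => //; apply/subsetP => y yO; rewrite !inE.
    by case: (y \in G); rewrite ?orbT ?yO.
  have m2 : s G <= s (gprefix x n) by apply: mono_sub => //; apply: gprefix_mono; exact: ltnW.
  have g0 : 0 <= gam := gam_ge0 _ _ hm.
  have : gam * (s O - s (gprefix x n)) <= gam * (s (G :|: A) - s G).
    by apply: ler_wpM2l => //; lra.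
  move=> h1 h2; rewrite /gam in h1 *; rewrite -mulrA; apply: ler_wpM2l; [by rewrite invr_ge0 ler0n|lra].
- split.
- exact: dd_ge0.
- by rewrite -cG; apply: ps => //; rewrite cG.
- have e : \sum_(y in A) marg f y G = 2^-1 * (\sum_(y in A) marg s y G) + lambda * dd d A G.
    rewrite mulr_sumr /dd mulr_sumr -big_split /=; apply: eq_bigr => y yA.
    rewrite /marg /f -(marg_disp hd (hAG y yA)); ring.
  rewrite -e mulr_sumr.
  rewrite /g gprefixS mulr_natl -sumr_const; apply: ler_sum => y yA; exact: hgr (hAG y yA).
Qed.

Lemma arith_step (R : realFieldType) (a n i S0 E K D g al la : R) :
  1 <= a -> a <= n -> 1 <= n -> 0 < al -> 0 < la -> 0 <= S0 -> K <= 2^-1 * S0 ->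
  a * i * D <= n * (n - 1) * E -> al * (2^-1 * S0 + la * E) <= a * g ->
  al * K * (n - 1) + al * la * i * D <= g * (n * (n - 1)).
Proof.
move=> ha han hn hal hla hS hK hD hg.
have nn : 0 <= n * (n - 1) by apply: mulr_ge0; lra.
have h1 : al * (2^-1 * S0 + la * E) * (n * (n - 1)) <= a * g * (n * (n - 1)).
  by apply: ler_wpM2r.
have h2 : K * a <= 2^-1 * S0 * n.
  apply: (le_trans (y := 2^-1 * S0 * a)); first by apply: ler_wpM2r => //; lra.
  by apply: ler_wpM2l => //; lra.
have h3 : al * (K * a) * (n - 1) <= al * (2^-1 * S0 * n) * (n - 1).
  by apply: ler_wpM2r; [lra|apply: ler_wpM2l => //; lra].
have h4 : al * la * (a * i * D) <= al * la * (n * (n - 1) * E).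
  by apply: ler_wpM2l => //; apply: mulr_ge0; lra.
have h5 : a * (al * K * (n - 1) + al * la * i * D) <= a * (g * (n * (n - 1))).
  have e1 : a * (al * K * (n - 1) + al * la * i * D) = al * (K * a) * (n - 1) + al * la * (a * i * D) by ring.
  have e2 : a * (g * (n * (n - 1))) = a * g * (n * (n - 1)) by ring.
  have e3 : al * (2^-1 * S0 + la * E) * (n * (n - 1)) = al * (2^-1 * S0 * n) * (n - 1) + al * la * (n * (n - 1) * E) by ring.
  rewrite e1 e2; lra.
by rewrite ler_pM2l in h5; lra.
Qed.

Lemma arith_final (R : realFieldType) (al la gam sO sB DO DB : R) :
  0 < al -> al <= 1 -> 0 < la -> 0 <= gam -> gam <= 1 -> 0 <= sB -> 0 <= DO ->
  al * (2^-1 * gam * (sO - sB)) + al * la * DO / 2 <= 2^-1 * sB + la * DB ->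
  al * gam / 2 * (sO + la * DO) <= sB + la * DB.
Proof.
move=> ha ha1 hl hg hg1 hs hD h.
have p1 : al * gam <= 1.
  have : al * gam <= al * 1 by apply: ler_wpM2l; lra.
  lra.
have p2 : al * gam * sB <= sB.
  have : al * gam * sB <= 1 * sB by apply: ler_wpM2r.
  lra.
have p3 : 0 <= al * la * DO * (1 - gam).
  apply: mulr_ge0; last lra.
  apply: mulr_ge0 => //; apply: mulr_ge0; lra.
have e : al * gam / 2 * (sO + la * DO) =
  al * (2^-1 * gam * (sO - sB)) + al * la * DO / 2 + al * gam * sB / 2 - al * la * DO * (1 - gam) / 2.
  by field.
rewrite e; lra.
Qed.

Lemma sum_nat_id (R : realFieldType) n :
  (\sum_(0 <= i < n) (i%:R : R)) * 2 = n%:R * (n%:R - 1).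
Proof.
elim: n => [|n IH]; first by rewrite big_nil mul0r mul0r.
rewrite big_nat_recr //= mulrDl IH -natr1; ring.
Qed.

Theorem mainTheorem11 (R : realFieldType) (X : finType) (n : nat)
  (s : {set X} -> R) (d : X -> X -> R) (lambda alpha : R)
  (x : nat -> X) (Bstar : {set X}) :
  (1 <= n)%N -> (n <= #|X|)%N ->
  nonneg_set s -> monotone_set s -> is_metric d ->
  0 < lambda -> 0 < alpha -> alpha <= 1 ->
  approx_greedy_run (fun B => 2^-1 * s B + lambda * sumdisp d B) alpha n x ->
  #|Bstar| = n ->
  (forall B : {set X}, #|B| = n ->
     s B + lambda * sumdisp d B <= s Bstar + lambda * sumdisp d Bstar) ->
  alpha * subm_ratio s (Bstar :|: gprefix x n) n / 2
    * (s Bstar + lambda * sumdisp d Bstar)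
  <= s (gprefix x n) + lambda * sumdisp d (gprefix x n).
Proof.
move=> hn _ hs hm hd hl ha ha1 hg hO _.
set f := (fun B => 2^-1 * s B + lambda * sumdisp d B).
set gam := subm_ratio s (Bstar :|: gprefix x n) n.
set K := 2^-1 * gam * (s Bstar - s (gprefix x n)).
set D := sumdisp d Bstar.
have tel : \sum_(0 <= i < n) (f (gprefix x i.+1) - f (gprefix x i)) = f (gprefix x n) - f (gprefix x 0).
  exact: (telescope_sumr (fun i => f (gprefix x i))).
have f0 : 0 <= f (gprefix x 0).
  rewrite /f gprefix0 sumdisp_dd /dd big_set0 !mulr0 addr0.
  apply: mulr_ge0; [by rewrite invr_ge0 ler0n|exact: hs].
suff key : alpha * K + alpha * lambda * D / 2 <= \sum_(0 <= i < n) (f (gprefix x i.+1) - f (gprefix x i)).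
  apply: arith_final.
  - exact: ha.
  - exact: ha1.
  - exact: hl.
  - exact: gam_ge0.
  - exact: gam_le1.
  - exact: hs.
  - exact: sumdisp_ge0.
  - rewrite tel in key; rewrite /f /K in key f0; lra.
have [n1|n2] : n = 1%N \/ (2 <= n)%N by lia.
  have [a [S0 [E [h1 h2 h3 h4 [h5 h6 h7]]]]] := step_facts (i:=0) hm hd hl ha hg hO hn.
  rewrite n1 in h2.
  have a1 : a = 1 by lra.
  subst a.
  have D0 : D = 0.
    rewrite n1 in hO; rewrite /D; have [o ->] := cards1P (introT eqP hO); rewrite sumdisp_dd /dd !big_set1.
    by have [-> _] := metric_facts hd; rewrite mulr0.
  rewrite n1 big_nat1 D0 mulr0 mul0r addr0 /K /gam n1.
  have : 0 <= alpha * (lambda * E) by apply: mulr_ge0; [lra|apply: mulr_ge0; lra].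
  have : alpha * (2^-1 * subm_ratio s (Bstar :|: gprefix x 1) 1 * (s Bstar - s (gprefix x 1)))
     <= alpha * (2^-1 * S0) by apply: ler_wpM2l => //; rewrite n1 in h4; lra.
  rewrite mul1r mulrDr in h7; rewrite /f; move=> q1 q2; lra.
set N := n.
have per : forall i, (i < N)%N ->
  alpha * K * (N%:R - 1) + alpha * lambda * i%:R * D
  <= (f (gprefix x i.+1) - f (gprefix x i)) * (N%:R * (N%:R - 1)).
  move=> i hi.
  have [a [S0 [E [h1 h2 h3 h4 [h5 h6 h7]]]]] := step_facts (i:=i) hm hd hl ha hg hO hi.
  have hN : 1 <= N%:R :> R by rewrite ler1n; lia.
  exact: (@arith_step R _ _ _ _ _ _ _ _ _ _ h1 h2 hN ha hl h3 h4 h6 h7).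
have sumper := ler_sum_nat (fun i hi => per i (proj2 (andP hi))).
specialize (sumper 0%N).
rewrite -mulr_suml big_split /= sumr_const_nat subn0 in sumper.
have e : \sum_(0 <= i < N) alpha * lambda * i%:R * D
    = alpha * lambda * D * \sum_(0 <= i < N) (i%:R : R).
  by rewrite mulr_sumr; apply: eq_bigr => i _; ring.
rewrite e in sumper.
have si := sum_nat_id R N.
have Npos : 0 < N%:R * (N%:R - 1) :> R.
  apply: mulr_gt0; first by rewrite ltr0n.
  by rewrite subr_gt0 ltr1n.
rewrite -(ler_pM2r Npos).
set T := \sum_(0 <= i < N) (f (gprefix x i.+1) - f (gprefix x i)).
set Sm := \sum_(0 <= i < N) (i%:R : R).
have si' : Sm = N%:R * (N%:R - 1) / 2 by rewrite -si mulfK // pnatr_eq0.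
have e2 : (alpha * K + alpha * lambda * D / 2) * (N%:R * (N%:R - 1))
   = (alpha * K * (N%:R - 1)) *+ N + alpha * lambda * D * Sm.
  by rewrite -mulr_natl si'; field.
rewrite e2; exact: sumper.
Qed.
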